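(* For any based space $(X,x_0)$, the topology of $\pi_1^{\tau}(X,x_0)$ is the finest group topology on $\pi_1(X,x_0)$ for which the map $\pi:\Omega(X,x_0)\to\pi_1(X,x_0)$, $\alpha\mapsto[\alpha]$, is continuous. Equivalently, if $\Phi:\pi_1(X,x_0)\to G$ is a homomorphism to a topological group $G$ such that $\Phi\circ\pi:\Omega(X,x_0)\to G$ is continuous, then $\Phi:\pi_1^{\tau}(X,x_0)\to G$ is continuous.
   Context: $\Omega(X,x_0)$ is the space of loops at $x_0$ with the compact-open topology. $\pi_1^{qtop}(X,x_0)$ is $\pi_1(X,x_0)$ with the quotient topology with respect to $\pi$. $F_M(S)$ is the free (Markov) topological group on a space $S$. For a group with (arbitrary) topology $G$, $\tau(G)$ is $G$ with the quotient topology with respect to the multiplication epimorphism $m_G:F_M(G)\to G$ sending each generator $g$ to $g$. $\pi_1^{\tau}(X,x_0)=\tau(\pi_1^{qtop}(X,x_0))$. *)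

(* Defs.v *)
From Stdlib Require Import Reals Lra List Classical ClassicalEpsilon
  FunctionalExtensionality PropExtensionality.
From Stdlib Require Import Relations.Relation_Operators.
Open Scope R_scope.


Definition is_topology {A : Type} (T : (A -> Prop) -> Prop) : Prop :=
  T (fun _ => True) /\
  (forall U V, T U -> T V -> T (fun x => U x /\ V x)) /\
  (forall F : (A -> Prop) -> Prop, (forall U, F U -> T U) ->
     T (fun x => exists U, F U /\ U x)).

Definition continuous {A B : Type} (TA : (A -> Prop) -> Prop)
  (TB : (B -> Prop) -> Prop) (f : A -> B) : Prop :=
  forall V, TB V -> TA (fun x => V (f x)).

Definition generated {A : Type} (S : (A -> Prop) -> Prop) : (A -> Prop) -> Prop :=
  fun U => forall T, is_topology T -> (forall V, S V -> T V) -> T U.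

Definition prodtop {A B : Type} (TA : (A -> Prop) -> Prop) (TB : (B -> Prop) -> Prop)
  : (A * B -> Prop) -> Prop :=
  generated (fun W => exists U V, TA U /\ TB V /\
                       forall p, W p <-> (U (fst p) /\ V (snd p))).

Definition compact {A : Type} (T : (A -> Prop) -> Prop) (K : A -> Prop) : Prop :=
  forall F : (A -> Prop) -> Prop, (forall U, F U -> T U) ->
    (forall x, K x -> exists U, F U /\ U x) ->
    exists l : list (A -> Prop), (forall U, In U l -> F U) /\
      (forall x, K x -> exists U, In U l /\ U x).

Definition Ropen (W : R -> Prop) : Prop :=
  forall x, W x -> exists eps, 0 < eps /\ forall y, Rabs (y - x) < eps -> W y.

Definition I := {t : R | 0 <= t <= 1}.

Definition TI : (I -> Prop) -> Prop :=
  fun V => exists W, Ropen W /\ forall t : I, V t <-> W (proj1_sig t).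

Lemma clamp_ok (r : R) : 0 <= Rmax 0 (Rmin 1 r) <= 1.
Proof.
  unfold Rmax, Rmin.
  destruct (Rle_dec 1 r); destruct (Rle_dec 0 _); lra.
Qed.

Definition clampI (r : R) : I := exist _ (Rmax 0 (Rmin 1 r)) (clamp_ok r).

Definition I0 : I := clampI 0.
Definition I1 : I := clampI 1.

Section Loops.
Context {X : Type} (TX : (X -> Prop) -> Prop) (x0 : X).

Definition is_loop (a : I -> X) : Prop :=
  continuous TI TX a /\ a I0 = x0 /\ a I1 = x0.

Definition Omega : Type := {a : I -> X | is_loop a}.

Definition CO : (Omega -> Prop) -> Prop :=
  generated (fun W => exists K U, compact TI K /\ TX U /\
     forall a : Omega, W a <-> (forall t, K t -> U (proj1_sig a t))).

Definition homotopic (a b : I -> X) : Prop :=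
  exists H : I * I -> X, continuous (prodtop TI TI) TX H /\
    (forall s, H (s, I0) = a s /\ H (s, I1) = b s) /\
    (forall t, H (I0, t) = x0 /\ H (I1, t) = x0).

Definition concat (a b : I -> X) : I -> X :=
  fun s => if Rle_dec (proj1_sig s) (1/2) then a (clampI (2 * proj1_sig s))
           else b (clampI (2 * proj1_sig s - 1)).

Definition reverse (a : I -> X) : I -> X := fun s => a (clampI (1 - proj1_sig s)).

Lemma const_loop_ok (HX : TX (fun _ => True)) : is_loop (fun _ => x0).
Proof.
  split; [| split; reflexivity].
  intros V _. exists (fun _ => V x0). split.
  - intros x Hx. exists 1. split; [lra | intros; exact Hx].
  - intro t; tauto.
Qed.
End Loops.

Definition quot {A : Type} (Rel : A -> A -> Prop) : Type :=
  {P : A -> Prop | exists a, P = Rel a}.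

Definition cls {A : Type} (Rel : A -> A -> Prop) (a : A) : quot Rel :=
  exist _ (Rel a) (ex_intro _ a eq_refl).

Definition rep {A : Type} {Rel : A -> A -> Prop} (c : quot Rel) : A :=
  proj1_sig (constructive_indefinite_description _ (proj2_sig c)).

Section Pi1.
Context {X : Type} (TX : (X -> Prop) -> Prop) (x0 : X).

Definition htp (a b : Omega TX x0) : Prop :=
  homotopic TX x0 (proj1_sig a) (proj1_sig b).

Definition pi1 : Type := quot htp.

Definition pi_map (a : Omega TX x0) : pi1 := cls htp a.

Definition pi1_mul (c d : pi1) : pi1 :=
  epsilon (inhabits c) (fun e =>
    homotopic TX x0 (concat (proj1_sig (rep c)) (proj1_sig (rep d)))
                    (proj1_sig (rep e))).

Definition pi1_inv (c : pi1) : pi1 :=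
  epsilon (inhabits c) (fun e =>
    homotopic TX x0 (reverse (proj1_sig (rep c))) (proj1_sig (rep e))).

Definition pi1_one (HX : is_topology TX) : pi1 :=
  pi_map (exist _ (fun _ => x0) (const_loop_ok TX x0 (proj1 HX))).

Definition qtop : (pi1 -> Prop) -> Prop :=
  fun U => CO TX x0 (fun a => U (pi_map a)).
End Pi1.

Definition is_group {G : Type} (mul : G -> G -> G) (inv : G -> G) (one : G) : Prop :=
  (forall a b c, mul (mul a b) c = mul a (mul b c)) /\
  (forall a, mul one a = a) /\
  (forall a, mul (inv a) a = one).

Definition is_group_topology {G : Type} (mul : G -> G -> G) (inv : G -> G)
  (T : (G -> Prop) -> Prop) : Prop :=
  is_topology T /\
  continuous (prodtop T T) T (fun p => mul (fst p) (snd p)) /\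
  continuous T T inv.

Section Free.
Context {S : Type}.

Definition word := list (bool * S).

Inductive red_step : word -> word -> Prop :=
  | red_cancel : forall w1 w2 b x,
      red_step (w1 ++ (b, x) :: (negb b, x) :: w2) (w1 ++ w2).

Definition word_eq : word -> word -> Prop := clos_refl_sym_trans word red_step.

Definition FreeGroup : Type := quot word_eq.

Definition F_mul (u v : FreeGroup) : FreeGroup := cls word_eq (rep u ++ rep v).
Definition F_inv (u : FreeGroup) : FreeGroup :=
  cls word_eq (rev (map (fun p => (negb (fst p), snd p)) (rep u))).
Definition F_one : FreeGroup := cls word_eq nil.
Definition F_eta (x : S) : FreeGroup := cls word_eq ((true, x) :: nil).

(** F_M(S): the finest group topology on F(S) making S -> F(S) continuous
    (the supremum of all such group topologies). *)
Definition FM_top (TS : (S -> Prop) -> Prop) : (FreeGroup -> Prop) -> Prop :=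
  generated (fun U => exists T, is_group_topology F_mul F_inv T /\
                                continuous TS T F_eta /\ T U).
End Free.

Section Tau.
Context {G : Type} (mul : G -> G -> G) (inv : G -> G) (one : G).

Definition eval_word (w : @word G) : G :=
  fold_right (fun (p : bool * G) (acc : G) => mul (if fst p then snd p else inv (snd p)) acc) one w.

Definition m_G (u : @FreeGroup G) : G := eval_word (rep u).

Definition tau_top (TG : (G -> Prop) -> Prop) : (G -> Prop) -> Prop :=
  fun U => FM_top TG (fun u => U (m_G u)).
End Tau.

Definition pi1_tau_top {X : Type} (TX : (X -> Prop) -> Prop) (HX : is_topology TX)
  (x0 : X) : (pi1 TX x0 -> Prop) -> Prop :=
  tau_top (pi1_mul TX x0) (pi1_inv TX x0) (pi1_one TX x0 HX) (qtop TX x0).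

(* Main.v *)
From Stdlib Require Import Reals Lra Classical ClassicalEpsilon
  FunctionalExtensionality PropExtensionality.
From Stdlib Require Import Relations.Relation_Operators.
Require Import Defs.
Open Scope R_scope.


Lemma I_eq (u v : I) : proj1_sig u = proj1_sig v -> u = v.
Proof.
  destruct u as [u hu], v as [v hv]; simpl; intros ->.
  f_equal; apply proof_irrelevance.
Qed.

Lemma clamp_in (r : R) : 0 <= r <= 1 -> proj1_sig (clampI r) = r.
Proof. intros; simpl; unfold Rmax, Rmin; repeat destruct Rle_dec; lra. Qed.

Lemma clampI_id (t : I) : clampI (proj1_sig t) = t.
Proof. apply I_eq. apply clamp_in. apply (proj2_sig t). Qed.

Lemma clamp_lip (r r' : R) :
  Rabs (proj1_sig (clampI r) - proj1_sig (clampI r')) <= Rabs (r - r').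
Proof. simpl; unfold Rmax, Rmin; repeat destruct Rle_dec;
  unfold Rabs; repeat destruct Rcase_abs; lra. Qed.

Lemma pI0 : proj1_sig I0 = 0.
Proof. apply clamp_in; lra. Qed.
Lemma pI1 : proj1_sig I1 = 1.
Proof. apply clamp_in; lra. Qed.

Lemma clampI_eq (r r' : R) : Rmax 0 (Rmin 1 r) = Rmax 0 (Rmin 1 r') -> clampI r = clampI r'.
Proof. intros; apply I_eq; simpl; auto. Qed.

Definition mc2 (f : R -> R -> R) : Prop :=
  forall s t e, 0 < e -> exists d, 0 < d /\ forall s' t',
    Rabs (s' - s) < d -> Rabs (t' - t) < d -> Rabs (f s' t' - f s t) < e.

Lemma mc2_const c : mc2 (fun _ _ => c).
Proof. intros s t e he; exists 1; split; [lra|]; intros.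
  replace (c - c) with 0 by ring; rewrite Rabs_R0; lra. Qed.
Lemma mc2_s : mc2 (fun s _ => s).
Proof. intros s t e he; exists e; split; [lra|]; intros; auto. Qed.
Lemma mc2_t : mc2 (fun _ t => t).
Proof. intros s t e he; exists e; split; [lra|]; intros; auto. Qed.

Lemma mc2_plus f g : mc2 f -> mc2 g -> mc2 (fun s t => f s t + g s t).
Proof.
  intros hf hg s t e he.
  destruct (hf s t (e/2)) as [d1 [hd1 H1]]; [lra|].
  destruct (hg s t (e/2)) as [d2 [hd2 H2]]; [lra|].
  exists (Rmin d1 d2); split; [apply Rmin_pos; auto|]; intros s' t' hs ht.
  specialize (H1 s' t'). specialize (H2 s' t').
  assert (Rmin d1 d2 <= d1) by apply Rmin_l.
  assert (Rmin d1 d2 <= d2) by apply Rmin_r.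
  replace (f s' t' + g s' t' - (f s t + g s t)) with
    ((f s' t' - f s t) + (g s' t' - g s t)) by ring.
  eapply Rle_lt_trans; [apply Rabs_triang|].
  assert (Rabs (f s' t' - f s t) < e/2) by (apply H1; lra).
  assert (Rabs (g s' t' - g s t) < e/2) by (apply H2; lra).
  lra.
Qed.

Lemma mc2_opp f : mc2 f -> mc2 (fun s t => - f s t).
Proof.
  intros hf s t e he. destruct (hf s t e he) as [d [hd H]].
  exists d; split; auto; intros.
  replace (- f s' t' - - f s t) with (- (f s' t' - f s t)) by ring.
  rewrite Rabs_Ropp; auto.
Qed.

Lemma mc2_minus f g : mc2 f -> mc2 g -> mc2 (fun s t => f s t - g s t).
Proof. intros; unfold Rminus; apply mc2_plus; auto; apply mc2_opp; auto. Qed.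

Lemma prod_bound (x x0 y y0 d : R) : 0 < d -> d <= 1 ->
  Rabs (x - x0) < d -> Rabs (y - y0) < d ->
  Rabs (x * y - x0 * y0) <= (Rabs x0 + Rabs y0 + 1) * d.
Proof.
  intros hd hd1 hx hy.
  replace (x * y - x0 * y0) with (x * (y - y0) + y0 * (x - x0)) by ring.
  eapply Rle_trans; [apply Rabs_triang|]. rewrite !Rabs_mult.
  assert (Rabs x <= Rabs x0 + 1).
  { replace x with (x0 + (x - x0)) by ring.
    eapply Rle_trans; [apply Rabs_triang|]. lra. }
  assert (0 <= Rabs y0) by apply Rabs_pos.
  assert (0 <= Rabs (y - y0)) by apply Rabs_pos.
  assert (0 <= Rabs (x - x0)) by apply Rabs_pos.
  assert (0 <= Rabs x) by apply Rabs_pos.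
  assert (Rabs x * Rabs (y - y0) <= (Rabs x0 + 1) * d) by
    (apply Rmult_le_compat; lra).
  assert (Rabs y0 * Rabs (x - x0) <= Rabs y0 * d) by
    (apply Rmult_le_compat_l; lra).
  nra.
Qed.

Lemma mc2_mult f g : mc2 f -> mc2 g -> mc2 (fun s t => f s t * g s t).
Proof.
  intros hf hg s t e he.
  set (K := Rabs (f s t) + Rabs (g s t) + 1).
  assert (hK : 1 <= K) by (unfold K; pose proof (Rabs_pos (f s t)); pose proof (Rabs_pos (g s t)); lra).
  set (e' := Rmin 1 (e / (2 * K))).
  assert (he' : 0 < e').
  { unfold e'; apply Rmin_pos; [lra|]. apply Rdiv_lt_0_compat; lra. }
  destruct (hf s t e' he') as [d1 [hd1 H1]].
  destruct (hg s t e' he') as [d2 [hd2 H2]].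
  exists (Rmin d1 d2); split; [apply Rmin_pos; auto|]; intros s' t' hs ht.
  assert (Rmin d1 d2 <= d1) by apply Rmin_l.
  assert (Rmin d1 d2 <= d2) by apply Rmin_r.
  assert (A1 : Rabs (f s' t' - f s t) < e') by (apply H1; lra).
  assert (A2 : Rabs (g s' t' - g s t) < e') by (apply H2; lra).
  assert (He1 : e' <= 1) by apply Rmin_l.
  assert (E2 : e' <= e / (2 * K)) by apply Rmin_r.
  pose proof (prod_bound _ _ _ _ _ he' He1 A1 A2) as PB. fold K in PB.
  assert (K * e' <= K * (e / (2*K))) by (apply Rmult_le_compat_l; lra).
  assert (K * (e / (2 * K)) = e / 2) by (field; lra).
  lra.
Qed.

Lemma mc2_comp1 (h : R -> R) f :
  (forall x y, Rabs (h x - h y) <= Rabs (x - y)) -> mc2 f -> mc2 (fun s t => h (f s t)).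
Proof.
  intros hl hf s t e he. destruct (hf s t e he) as [d [hd H]].
  exists d; split; auto; intros. eapply Rle_lt_trans; [apply hl|]; auto.
Qed.

Lemma mc2_abs f : mc2 f -> mc2 (fun s t => Rabs (f s t)).
Proof. apply mc2_comp1. intros; apply Rabs_triang_inv2. Qed.

Lemma mc2_min f g : mc2 f -> mc2 g -> mc2 (fun s t => Rmin (f s t) (g s t)).
Proof.
  intros hf hg.
  assert (E : forall s t, Rmin (f s t) (g s t) = (f s t + g s t - Rabs (f s t - g s t)) / 2).
  { intros; unfold Rmin, Rabs; repeat destruct Rle_dec; repeat destruct Rcase_abs; lra. }
  assert (mc2 (fun s t => (f s t + g s t - Rabs (f s t - g s t)) * / 2)).
  { apply mc2_mult; [|apply mc2_const]. apply mc2_minus; [apply mc2_plus; auto|].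
    apply mc2_abs, mc2_minus; auto. }
  intros s t e he. destruct (H s t e he) as [d [hd Hd]]. exists d; split; auto.
  intros. rewrite !E. unfold Rdiv. auto.
Qed.

Lemma mc2_max f g : mc2 f -> mc2 g -> mc2 (fun s t => Rmax (f s t) (g s t)).
Proof.
  intros hf hg.
  assert (E : forall s t, Rmax (f s t) (g s t) = (f s t + g s t + Rabs (f s t - g s t)) / 2).
  { intros; unfold Rmax, Rabs; repeat destruct Rle_dec; repeat destruct Rcase_abs; lra. }
  assert (mc2 (fun s t => (f s t + g s t + Rabs (f s t - g s t)) * / 2)).
  { apply mc2_mult; [|apply mc2_const]. apply mc2_plus; [apply mc2_plus; auto|].
    apply mc2_abs, mc2_minus; auto. }
  intros s t e he. destruct (H s t e he) as [d [hd Hd]]. exists d; split; auto.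
  intros. rewrite !E. unfold Rdiv. auto.
Qed.

Ltac mc2_tac := repeat first [ apply mc2_plus | apply mc2_minus | apply mc2_mult
  | apply mc2_opp | apply mc2_abs | apply mc2_min | apply mc2_max
  | apply mc2_s | apply mc2_t | apply mc2_const ].




Lemma open_ext {A : Type} (T : (A -> Prop) -> Prop) (U V : A -> Prop) :
  T U -> (forall x, U x <-> V x) -> T V.
Proof.
  intros h e. replace V with U; auto.
  apply functional_extensionality; intro x; apply propositional_extensionality; auto.
Qed.

Lemma gen_top {A : Type} (S : (A -> Prop) -> Prop) : is_topology (generated S).
Proof.
  split; [|split].
  - intros T hT _; apply (proj1 hT).
  - intros U V hU hV T hT hS. apply (proj1 (proj2 hT)); [apply hU|apply hV]; auto.
  - intros F hF T hT hS. apply (proj2 (proj2 hT)). intros U hU; apply (hF U hU); auto.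
Qed.

Lemma gen_sub {A : Type} (S : (A -> Prop) -> Prop) U : S U -> generated S U.
Proof. intros h T hT hS; auto. Qed.

Lemma gen_mono {A : Type} (S S' : (A -> Prop) -> Prop) :
  (forall U, S U -> S' U) -> forall U, generated S U -> generated S' U.
Proof. intros h U hU T hT hS. apply hU; auto. Qed.

Lemma gen_min {A : Type} (S T : (A -> Prop) -> Prop) :
  is_topology T -> (forall U, S U -> T U) -> forall U, generated S U -> T U.
Proof. intros hT hS U hU; apply hU; auto. Qed.

Lemma open_local {A : Type} (T : (A -> Prop) -> Prop) (P : A -> Prop) :
  is_topology T ->
  (forall x, P x -> exists Q, T Q /\ Q x /\ forall y, Q y -> P y) -> T P.
Proof.
  intros [_ [_ hU]] h.
  apply open_ext with (fun x => exists Q, (T Q /\ forall y, Q y -> P y) /\ Q x).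
  - apply hU. intros Q [hQ _]; auto.
  - intro x; split.
    + intros [Q [[_ hQ] hx]]; auto.
    + intros hx. destruct (h x hx) as [Q [hQ [hQx hQP]]]. exists Q; auto.
Qed.

Definition pre_top {A B : Type} (TB : (A -> Prop) -> Prop) (f : A -> B) : (B -> Prop) -> Prop :=
  fun U => TB (fun a => U (f a)).

Lemma pre_top_top {A B : Type} (TB : (A -> Prop) -> Prop) (f : A -> B) :
  is_topology TB -> is_topology (pre_top TB f).
Proof.
  intros [h1 [h2 h3]]; split; [|split]; unfold pre_top.
  - exact h1.
  - intros U V hU hV; apply h2; auto.
  - intros F hF.
    apply open_ext with (fun b => exists W, (exists U, F U /\ W = (fun b => U (f b))) /\ W b).
    + apply h3. intros W [U [hU ->]]; auto.
    + intro b; split.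
      * intros [W [[U [hU ->]] hb]]; eauto.
      * intros [U [hU hb]]. exists (fun b => U (f b)); split; eauto.
Qed.

Lemma cont_gen {A B : Type} (TA : (A -> Prop) -> Prop) (S : (B -> Prop) -> Prop) (f : A -> B) :
  is_topology TA -> (forall V, S V -> TA (fun x => V (f x))) ->
  continuous TA (generated S) f.
Proof.
  intros hA hS V hV.
  apply (gen_min S (pre_top TA f)); auto. apply pre_top_top; auto.
Qed.

Lemma cont_comp {A B C : Type} TA TB TC (f : A -> B) (g : B -> C) :
  continuous TA TB f -> continuous TB TC g -> continuous TA TC (fun x => g (f x)).
Proof. intros hf hg V hV. apply (hf (fun y => V (g y))). apply hg. auto. Qed.

Lemma cont_const {A B : Type} (TA : (A -> Prop) -> Prop) (TB : (B -> Prop) -> Prop) (c : B) :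
  is_topology TA -> continuous TA TB (fun _ => c).
Proof.
  intros [h1 [_ h3]] V _. destruct (classic (V c)).
  - apply open_ext with (fun _ => True); auto. intros; tauto.
  - apply open_ext with (fun x => exists U, (fun _ : A -> Prop => False) U /\ U x).
    + apply h3. intros _ [].
    + intros x; split; [intros [U [[] _]]|tauto].
Qed.

Lemma cont_id {A : Type} (TA : (A -> Prop) -> Prop) : continuous TA TA (fun x => x).
Proof. intros V hV; exact hV. Qed.

Lemma prodtop_top {A B : Type} TA TB : is_topology (@prodtop A B TA TB).
Proof. apply gen_top. Qed.

Lemma prodtop_mono {A B : Type} (TA TA' : (A -> Prop) -> Prop) (TB TB' : (B -> Prop) -> Prop) :
  (forall U, TA U -> TA' U) -> (forall U, TB U -> TB' U) ->
  forall W, prodtop TA TB W -> prodtop TA' TB' W.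
Proof.
  intros hA hB. apply gen_mono. intros W [U [V [hU [hV hW]]]].
  exists U, V; auto.
Qed.

Lemma cont_pair {A B C : Type} TA TB TC (f : A -> B) (g : A -> C) :
  is_topology TA -> continuous TA TB f -> continuous TA TC g ->
  continuous TA (prodtop TB TC) (fun x => (f x, g x)).
Proof.
  intros hA hf hg. apply cont_gen; auto.
  intros W [U [V [hU [hV hW]]]].
  apply open_ext with (fun x => U (f x) /\ V (g x)).
  - apply (proj1 (proj2 hA)); auto.
  - intro x; rewrite hW; simpl; tauto.
Qed.

Lemma cont_fst {A B : Type} (TA : (A -> Prop) -> Prop) (TB : (B -> Prop) -> Prop) :
  is_topology TB -> continuous (prodtop TA TB) TA fst.
Proof.
  intros hB U hU. apply gen_sub. exists U, (fun _ => True).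
  split; auto; split; [apply (proj1 hB)|]. intros; tauto.
Qed.

Lemma cont_snd {A B : Type} (TA : (A -> Prop) -> Prop) (TB : (B -> Prop) -> Prop) :
  is_topology TA -> continuous (prodtop TA TB) TB snd.
Proof.
  intros hA U hU. apply gen_sub. exists (fun _ => True), U.
  split; [apply (proj1 hA)|]; split; auto. intros; tauto.
Qed.

Lemma prod_rect {A B : Type} (TA : (A -> Prop) -> Prop) (TB : (B -> Prop) -> Prop) P :
  is_topology TA -> is_topology TB -> prodtop TA TB P ->
  forall x y, P (x, y) -> exists U V, TA U /\ TB V /\ U x /\ V y /\
     forall x' y', U x' -> V y' -> P (x', y').
Proof.
  intros hA hB hP.
  set (Q := fun (W : A * B -> Prop) => forall x y, W (x, y) -> exists U V, TA U /\ TB V /\ U x /\ V y /\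
     forall x' y', U x' -> V y' -> W (x', y')).
  assert (HQ : is_topology Q).
  { split; [|split].
    - intros x y _. exists (fun _ => True), (fun _ => True).
      split; [apply (proj1 hA)|]; split; [apply (proj1 hB)|]; auto.
    - intros W1 W2 h1 h2 x y [w1 w2].
      destruct (h1 x y w1) as [U1 [V1 [a1 [b1 [c1 [d1 e1]]]]]].
      destruct (h2 x y w2) as [U2 [V2 [a2 [b2 [c2 [d2 e2]]]]]].
      exists (fun x => U1 x /\ U2 x), (fun y => V1 y /\ V2 y).
      split; [apply (proj1 (proj2 hA)); auto|]; split; [apply (proj1 (proj2 hB)); auto|]; split; auto; split; auto.
      intros x' y' [] []; split; auto.
    - intros F hF x y [W [hW hx]].
      destruct (hF W hW x y hx) as [U [V [a [b [c [d e]]]]]].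
      exists U, V; do 4 (split; auto). intros; exists W; auto. }
  refine (gen_min _ Q HQ _ P hP).
  intros W [U [V [hU [hV hW]]]] x y hxy. rewrite hW in hxy; simpl in hxy.
  exists U, V; split; auto; split; auto; split; [tauto|]; split; [tauto|].
  intros; rewrite hW; simpl; auto.
Qed.

Lemma rect_open {A B : Type} (TA : (A -> Prop) -> Prop) (TB : (B -> Prop) -> Prop) U V :
  TA U -> TB V -> prodtop TA TB (fun p => U (fst p) /\ V (snd p)).
Proof. intros; apply gen_sub; exists U, V; split; auto; split; auto; tauto. Qed.


Notation ps := (@proj1_sig R (fun t => 0 <= t <= 1)).

Lemma TI_top : is_topology TI.
Proof.
  split; [|split].
  - exists (fun _ => True); split; [|tauto]. intros x _; exists 1; split; [lra|auto].
  - intros U V [W1 [o1 e1]] [W2 [o2 e2]]. exists (fun r => W1 r /\ W2 r); split.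
    + intros x [h1 h2]. destruct (o1 x h1) as [d1 [hd1 H1]]. destruct (o2 x h2) as [d2 [hd2 H2]].
      exists (Rmin d1 d2); split; [apply Rmin_pos; auto|]. intros y hy.
      pose proof (Rmin_l d1 d2); pose proof (Rmin_r d1 d2). split; [apply H1|apply H2]; lra.
    + intro t; rewrite e1, e2; tauto.
  - intros F hF.
    exists (fun r => exists U W, F U /\ Ropen W /\ (forall t : I, U t <-> W (ps t)) /\ W r).
    split.
    + intros x [U [W [hU [oW [eW hx]]]]]. destruct (oW x hx) as [d [hd H]].
      exists d; split; auto. intros y hy. exists U, W; auto.
    + intro t; split.
      * intros [U [hU ht]]. destruct (hF U hU) as [W [oW eW]]. exists U, W.
        split; [auto|split; [auto|split; [auto|apply eW; auto]]].
      * intros [U [W [hU [_ [eW hx]]]]]. exists U; split; auto. apply eW; auto.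
Qed.

Lemma TI_local (V : I -> Prop) :
  (forall t, V t -> exists e, 0 < e /\ forall t', Rabs (ps t' - ps t) < e -> V t') -> TI V.
Proof.
  intros h.
  exists (fun r => exists t e, V t /\ 0 < e /\ (forall t', Rabs (ps t' - ps t) < e -> V t') /\ Rabs (r - ps t) < e).
  split.
  - intros r [t [e [hV [he [H hr]]]]]. exists (e - Rabs (r - ps t)); split; [lra|].
    intros y hy. exists t, e; repeat split; auto.
    replace (y - ps t) with ((y - r) + (r - ps t)) by ring.
    eapply Rle_lt_trans; [apply Rabs_triang|]. lra.
  - intro t; split.
    + intros hV. destruct (h t hV) as [e [he H]]. exists t, e; repeat split; auto.
      replace (ps t - ps t) with 0 by ring; rewrite Rabs_R0; auto.
    + intros [t0 [e [_ [_ [H hr]]]]]. apply H; auto.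
Qed.

Lemma TI_open_ball (V : I -> Prop) : TI V -> forall t, V t ->
  exists e, 0 < e /\ forall t', Rabs (ps t' - ps t) < e -> V t'.
Proof.
  intros [W [oW eW]] t ht. apply eW in ht. destruct (oW _ ht) as [e [he H]].
  exists e; split; auto. intros t' h'. apply eW. apply H; auto.
Qed.

Definition dist2 (p q : I * I) (e : R) : Prop :=
  Rabs (ps (fst q) - ps (fst p)) < e /\ Rabs (ps (snd q) - ps (snd p)) < e.

Lemma PI_local (P : I * I -> Prop) :
  (forall p, P p -> exists e, 0 < e /\ forall q, dist2 p q e -> P q) -> prodtop TI TI P.
Proof.
  intros h. apply open_local; [apply prodtop_top|].
  intros p hp. destruct (h p hp) as [e [he H]].
  exists (fun q => (fun s : I => Rabs (ps s - ps (fst p)) < e) (fst q) /\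
                  (fun s : I => Rabs (ps s - ps (snd p)) < e) (snd q)).
  split; [|split].
  - assert (HB : forall c, TI (fun s : I => Rabs (ps s - c) < e)).
    { intro c. apply TI_local. intros t ht. exists (e - Rabs (ps t - c)); split; [lra|].
      intros t' h'. replace (ps t' - c) with ((ps t' - ps t) + (ps t - c)) by ring.
      eapply Rle_lt_trans; [apply Rabs_triang|]. lra. }
    exact (rect_open TI TI _ _ (HB (ps (fst p))) (HB (ps (snd p)))).
  - simpl; replace (ps (fst p) - ps (fst p)) with 0 by ring;
      replace (ps (snd p) - ps (snd p)) with 0 by ring; rewrite Rabs_R0; auto.
  - intros q [h1 h2]; apply H; split; auto.
Qed.

Lemma PI_ball (P : I * I -> Prop) : prodtop TI TI P -> forall p, P p ->
  exists e, 0 < e /\ forall q, dist2 p q e -> P q.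
Proof.
  intros hP [s t] hp.
  destruct (prod_rect TI TI P TI_top TI_top hP s t hp) as [U [V [hU [hV [hs [ht H]]]]]].
  destruct (TI_open_ball U hU s hs) as [e1 [he1 H1]].
  destruct (TI_open_ball V hV t ht) as [e2 [he2 H2]].
  exists (Rmin e1 e2); split; [apply Rmin_pos; auto|].
  intros [s' t'] [d1 d2]; simpl in *.
  pose proof (Rmin_l e1 e2); pose proof (Rmin_r e1 e2).
  apply H; [apply H1|apply H2]; lra.
Qed.

Definition cont1 {X : Type} (TX : (X -> Prop) -> Prop) (a : I -> X) : Prop :=
  forall V, TX V -> forall s, V (a s) -> exists e, 0 < e /\
    forall s', Rabs (ps s' - ps s) < e -> V (a s').

Definition cont2 {X : Type} (TX : (X -> Prop) -> Prop) (H : I * I -> X) : Prop :=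
  forall V, TX V -> forall p, V (H p) -> exists e, 0 < e /\
    forall q, dist2 p q e -> V (H q).

Lemma cont1_of {X} TX (a : I -> X) : continuous TI TX a -> cont1 TX a.
Proof. intros h V hV s hs. apply (TI_open_ball _ (h V hV)); auto. Qed.
Lemma of_cont1 {X} TX (a : I -> X) : cont1 TX a -> continuous TI TX a.
Proof. intros h V hV. apply TI_local. intros; apply h; auto. Qed.
Lemma cont2_of {X} TX (H : I * I -> X) : continuous (prodtop TI TI) TX H -> cont2 TX H.
Proof. intros h V hV p hp. apply (PI_ball _ (h V hV)); auto. Qed.
Lemma of_cont2 {X} TX (H : I * I -> X) : cont2 TX H -> continuous (prodtop TI TI) TX H.
Proof. intros h V hV. apply PI_local. intros; apply h; auto. Qed.

Lemma cont2_comp {X} TX (H : I * I -> X) f1 f2 : cont2 TX H -> mc2 f1 -> mc2 f2 ->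
  cont2 TX (fun p => H (clampI (f1 (ps (fst p)) (ps (snd p))), clampI (f2 (ps (fst p)) (ps (snd p))))).
Proof.
  intros hH h1 h2 V hV p hp.
  destruct (hH V hV _ hp) as [e [he He]].
  destruct (h1 (ps (fst p)) (ps (snd p)) e he) as [d1 [hd1 D1]].
  destruct (h2 (ps (fst p)) (ps (snd p)) e he) as [d2 [hd2 D2]].
  exists (Rmin d1 d2); split; [apply Rmin_pos; auto|].
  intros q [q1 q2]. pose proof (Rmin_l d1 d2); pose proof (Rmin_r d1 d2).
  apply He; split; simpl; (eapply Rle_lt_trans; [apply clamp_lip|]);
   [apply D1|apply D2]; lra.
Qed.

Lemma cont2_fst {X} TX (a : I -> X) : cont1 TX a -> cont2 TX (fun p => a (fst p)).
Proof.
  intros h V hV p hp. destruct (h V hV _ hp) as [e [he He]].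
  exists e; split; auto. intros q [q1 _]; auto.
Qed.

Lemma cont1_slice {X} TX (H : I * I -> X) c : cont2 TX H -> cont1 TX (fun s => H (s, c)).
Proof.
  intros h V hV s hs. destruct (h V hV _ hs) as [e [he He]].
  exists e; split; auto. intros s' h'. apply He; split; simpl; auto.
  replace (ps c - ps c) with 0 by ring; rewrite Rabs_R0; auto.
Qed.

Lemma cont2_paste_t {X} TX (K1 K2 : I * I -> X) :
  cont2 TX K1 -> cont2 TX K2 ->
  (forall p, ps (snd p) = 1/2 -> K1 p = K2 p) ->
  cont2 TX (fun p => if Rle_dec (ps (snd p)) (1/2) then K1 p else K2 p).
Proof.
  intros h1 h2 hb V hV p hp.
  destruct (Rtotal_order (ps (snd p)) (1/2)) as [lt | [eq | gt]].
  - destruct (Rle_dec (ps (snd p)) (1/2)); [|lra].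
    destruct (h1 V hV p hp) as [e [he He]].
    exists (Rmin e (1/2 - ps (snd p))); split; [apply Rmin_pos; lra|].
    intros q [q1 q2]. pose proof (Rmin_l e (1/2 - ps (snd p))); pose proof (Rmin_r e (1/2 - ps (snd p))).
    destruct (Rle_dec (ps (snd q)) (1/2)).
    + apply He; split; lra.
    + exfalso. unfold Rabs in q2; destruct Rcase_abs in q2; lra.
  - assert (V (K1 p) /\ V (K2 p)) as [v1 v2].
    { destruct (Rle_dec (ps (snd p)) (1/2)); [|lra]. rewrite <- hb; auto. }
    destruct (h1 V hV p v1) as [e1 [he1 He1]].
    destruct (h2 V hV p v2) as [e2 [he2 He2]].
    exists (Rmin e1 e2); split; [apply Rmin_pos; lra|].
    intros q [q1 q2]. pose proof (Rmin_l e1 e2); pose proof (Rmin_r e1 e2).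
    destruct (Rle_dec (ps (snd q)) (1/2)); [apply He1|apply He2]; split; lra.
  - destruct (Rle_dec (ps (snd p)) (1/2)); [lra|].
    destruct (h2 V hV p hp) as [e [he He]].
    exists (Rmin e (ps (snd p) - 1/2)); split; [apply Rmin_pos; lra|].
    intros q [q1 q2]. pose proof (Rmin_l e (ps (snd p) - 1/2)); pose proof (Rmin_r e (ps (snd p) - 1/2)).
    destruct (Rle_dec (ps (snd q)) (1/2)).
    + exfalso. unfold Rabs in q2; destruct Rcase_abs in q2; lra.
    + apply He; split; lra.
Qed.

Lemma cont2_paste_s {X} TX (K1 K2 : I * I -> X) :
  cont2 TX K1 -> cont2 TX K2 ->
  (forall p, ps (fst p) = 1/2 -> K1 p = K2 p) ->
  cont2 TX (fun p => if Rle_dec (ps (fst p)) (1/2) then K1 p else K2 p).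
Proof.
  intros h1 h2 hb V hV p hp.
  destruct (Rtotal_order (ps (fst p)) (1/2)) as [lt | [eq | gt]].
  - destruct (Rle_dec (ps (fst p)) (1/2)); [|lra].
    destruct (h1 V hV p hp) as [e [he He]].
    exists (Rmin e (1/2 - ps (fst p))); split; [apply Rmin_pos; lra|].
    intros q [q1 q2]. pose proof (Rmin_l e (1/2 - ps (fst p))); pose proof (Rmin_r e (1/2 - ps (fst p))).
    destruct (Rle_dec (ps (fst q)) (1/2)).
    + apply He; split; lra.
    + exfalso. unfold Rabs in q1; destruct Rcase_abs in q1; lra.
  - assert (V (K1 p) /\ V (K2 p)) as [v1 v2].
    { destruct (Rle_dec (ps (fst p)) (1/2)); [|lra]. rewrite <- hb; auto. }
    destruct (h1 V hV p v1) as [e1 [he1 He1]].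
    destruct (h2 V hV p v2) as [e2 [he2 He2]].
    exists (Rmin e1 e2); split; [apply Rmin_pos; lra|].
    intros q [q1 q2]. pose proof (Rmin_l e1 e2); pose proof (Rmin_r e1 e2).
    destruct (Rle_dec (ps (fst q)) (1/2)); [apply He1|apply He2]; split; lra.
  - destruct (Rle_dec (ps (fst p)) (1/2)); [lra|].
    destruct (h2 V hV p hp) as [e [he He]].
    exists (Rmin e (ps (fst p) - 1/2)); split; [apply Rmin_pos; lra|].
    intros q [q1 q2]. pose proof (Rmin_l e (ps (fst p) - 1/2)); pose proof (Rmin_r e (ps (fst p) - 1/2)).
    destruct (Rle_dec (ps (fst q)) (1/2)).
    + exfalso. unfold Rabs in q1; destruct Rcase_abs in q1; lra.
    + apply He; split; lra.
Qed.


Lemma cont2_ext {X} TX (H H' : I * I -> X) : (forall p, H p = H' p) -> cont2 TX H -> cont2 TX H'.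
Proof. intros e h V hV p hp. rewrite <- e in hp. destruct (h V hV p hp) as [d [hd D]].
  exists d; split; auto; intros; rewrite <- e; auto. Qed.

Ltac ceq := unfold I0, I1; apply I_eq; rewrite ?pI0, ?pI1; rewrite !clamp_in; lra.

Lemma concat_K {X} TX (H1 H2 : I * I -> X) :
  cont2 TX H1 -> cont2 TX H2 -> (forall t, H1 (I1, t) = H2 (I0, t)) ->
  cont2 TX (fun p => if Rle_dec (ps (fst p)) (1/2) then H1 (clampI (2 * ps (fst p)), snd p)
                     else H2 (clampI (2 * ps (fst p) - 1), snd p)).
Proof.
  intros h1 h2 hb. apply cont2_paste_s.
  - eapply cont2_ext; [|apply (cont2_comp TX H1 (fun s t => 2 * s) (fun s t => t)); auto; mc2_tac].
    intros p; cbv beta; rewrite clampI_id; auto.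
  - eapply cont2_ext; [|apply (cont2_comp TX H2 (fun s t => 2 * s - 1) (fun s t => t)); auto; mc2_tac].
    intros p; cbv beta; rewrite clampI_id; auto.
  - intros [s0 t0] hp; simpl in hp |- *; rewrite hp. replace (clampI (2 * (1/2))) with I1 by ceq.
    replace (clampI (2 * (1/2) - 1)) with I0 by ceq. auto.
Qed.

Lemma concat_loop {X} TX (x0 : X) a b : is_loop TX x0 a -> is_loop TX x0 b ->
  is_loop TX x0 (concat a b).
Proof.
  intros [ca [a0 a1]] [cb [b0 b1]]. split; [|split].
  - apply of_cont1.
    apply (cont1_slice TX _ I0 (concat_K TX (fun p => a (fst p)) (fun p => b (fst p))
       (cont2_fst _ _ (cont1_of _ _ ca)) (cont2_fst _ _ (cont1_of _ _ cb)) ltac:(intros; simpl; congruence))).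
  - unfold concat. rewrite pI0. destruct Rle_dec; [|lra].
    replace (clampI (2 * 0)) with I0 by ceq. auto.
  - unfold concat. rewrite pI1. destruct Rle_dec; [lra|].
    replace (clampI (2 * 1 - 1)) with I1 by ceq. auto.
Qed.

Lemma reverse_loop {X} TX (x0 : X) a : is_loop TX x0 a -> is_loop TX x0 (reverse a).
Proof.
  intros [ca [a0 a1]]. split; [|split].
  - apply of_cont1. unfold reverse.
    apply (cont1_slice TX _ I0 (cont2_comp TX (fun p => a (fst p)) (fun s t => 1 - s) (fun s t => t)
      (cont2_fst _ _ (cont1_of _ _ ca)) ltac:(mc2_tac) ltac:(mc2_tac))).
  - unfold reverse. rewrite pI0. replace (clampI (1 - 0)) with I1 by ceq. auto.
  - unfold reverse. rewrite pI1. replace (clampI (1 - 1)) with I0 by ceq. auto.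
Qed.

Lemma hom_refl {X} TX (x0 : X) a : is_loop TX x0 a -> homotopic TX x0 a a.
Proof.
  intros [ca [a0 a1]]. exists (fun p => a (fst p)). split; [|split].
  - apply of_cont2, cont2_fst, cont1_of; auto.
  - intros; simpl; auto.
  - intros; simpl; auto.
Qed.

Lemma hom_sym {X} TX (x0 : X) a b : homotopic TX x0 a b -> homotopic TX x0 b a.
Proof.
  intros [H [cH [e1 e2]]].
  exists (fun p => H (fst p, clampI (1 - ps (snd p)))). split; [|split].
  - apply of_cont2.
    eapply cont2_ext; [|apply (cont2_comp TX H (fun s t => s) (fun s t => 1 - t)); [apply cont2_of; auto|mc2_tac|mc2_tac]].
    intros p; cbv beta; rewrite clampI_id; auto.
  - intros s; cbn [fst snd]. rewrite pI0, pI1.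
    replace (clampI (1 - 0)) with I1 by ceq. replace (clampI (1 - 1)) with I0 by ceq.
    destruct (e1 s); auto.
  - intros t; cbn [fst snd]. apply e2.
Qed.

Lemma hom_trans {X} TX (x0 : X) a b c : homotopic TX x0 a b -> homotopic TX x0 b c -> homotopic TX x0 a c.
Proof.
  intros [H1 [c1 [e1 f1]]] [H2 [c2 [e2 f2]]].
  exists (fun p => if Rle_dec (ps (snd p)) (1/2) then H1 (fst p, clampI (2 * ps (snd p)))
                   else H2 (fst p, clampI (2 * ps (snd p) - 1))). split; [|split].
  - apply of_cont2. apply cont2_paste_t.
    + eapply cont2_ext; [|apply (cont2_comp TX H1 (fun s t => s) (fun s t => 2 * t)); [apply cont2_of; auto|mc2_tac|mc2_tac]].
      intros p; cbv beta; rewrite clampI_id; auto.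
    + eapply cont2_ext; [|apply (cont2_comp TX H2 (fun s t => s) (fun s t => 2 * t - 1)); [apply cont2_of; auto|mc2_tac|mc2_tac]].
      intros p; cbv beta; rewrite clampI_id; auto.
    + intros [s0 t0] hp; simpl in hp |- *; rewrite hp. replace (clampI (2 * (1/2))) with I1 by ceq.
      replace (clampI (2 * (1/2) - 1)) with I0 by ceq. destruct (e1 s0), (e2 s0); congruence.
  - intros s; cbn [fst snd]. rewrite pI0, pI1. split.
    + destruct Rle_dec; [|lra]. replace (clampI (2 * 0)) with I0 by ceq. apply e1.
    + destruct Rle_dec; [lra|]. replace (clampI (2 * 1 - 1)) with I1 by ceq. apply e2.
  - intros t; cbn [fst snd]. destruct Rle_dec; [apply f1|apply f2].
Qed.

Lemma hom_concat {X} TX (x0 : X) a a' b b' : homotopic TX x0 a a' -> homotopic TX x0 b b' ->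
  homotopic TX x0 (concat a b) (concat a' b').
Proof.
  intros [H1 [c1 [e1 f1]]] [H2 [c2 [e2 f2]]].
  exists (fun p => if Rle_dec (ps (fst p)) (1/2) then H1 (clampI (2 * ps (fst p)), snd p)
                     else H2 (clampI (2 * ps (fst p) - 1), snd p)). split; [|split].
  - apply of_cont2, concat_K; try (apply cont2_of; auto).
    intros t; destruct (f1 t), (f2 t); congruence.
  - intros s; unfold concat; cbn [fst snd]. destruct Rle_dec; [apply e1|apply e2].
  - intros t; cbn [fst snd]. rewrite pI0, pI1. split.
    + destruct Rle_dec; [|lra]. replace (clampI (2 * 0)) with I0 by ceq. apply f1.
    + destruct Rle_dec; [lra|]. replace (clampI (2 * 1 - 1)) with I1 by ceq. apply f2.
Qed.

Lemma hom_reparam {X} TX (x0 : X) (L A B : I -> X) (f : R -> R -> R) :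
  cont1 TX L -> mc2 f ->
  (forall s, A s = L (clampI (f (ps s) 0))) ->
  (forall s, B s = L (clampI (f (ps s) 1))) ->
  (forall t, 0 <= t <= 1 -> L (clampI (f 0 t)) = x0 /\ L (clampI (f 1 t)) = x0) ->
  homotopic TX x0 A B.
Proof.
  intros cL mf hA hB hE.
  exists (fun p => L (clampI (f (ps (fst p)) (ps (snd p))))). split; [|split].
  - apply of_cont2.
    eapply cont2_ext; [|apply (cont2_comp TX (fun p => L (fst p)) f (fun s t => t)); [apply cont2_fst; auto|auto|mc2_tac]].
    intros p; cbv beta; auto.
  - intros s; cbn [fst snd]. rewrite pI0, pI1; auto.
  - intros t; cbn [fst snd]. rewrite pI0, pI1. apply hE. apply (proj2_sig t).
Qed.


Ltac simp_clamp := repeat match goal with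
  |- context [proj1_sig (clampI ?r)] => rewrite (clamp_in r) by lra end.
Ltac kill_dec := repeat match goal with
  |- context [Rle_dec ?x ?y] => destruct (Rle_dec x y); try (exfalso; lra); simp_clamp end.
Ltac fin_eq := try (f_equal; apply I_eq; simp_clamp; lra).

Definition phiA (s : R) := Rmin (2 * s) (Rmin (s + /4) (/2 * s + /2)).

Lemma hom_assoc {X} TX (x0 : X) a b c : is_loop TX x0 a -> is_loop TX x0 b -> is_loop TX x0 c ->
  homotopic TX x0 (concat (concat a b) c) (concat a (concat b c)).
Proof.
  intros la lb lc.
  assert (lL : is_loop TX x0 (concat a (concat b c))) by (apply concat_loop; auto; apply concat_loop; auto).
  destruct lL as [cL [L0 L1]].
  apply (hom_reparam TX x0 (concat a (concat b c)) _ _ (fun s t => (1 - t) * phiA s + t * s)).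
  - apply cont1_of; auto.
  - unfold phiA; mc2_tac.
  - intros s. destruct s as [u hu]. cbn [proj1_sig].
    replace ((1 - 0) * phiA u + 0 * u) with (phiA u) by ring.
    assert (hc : (u <= /4 /\ phiA u = 2 * u) \/ (/4 <= u <= /2 /\ phiA u = u + /4)
               \/ (/2 <= u /\ phiA u = /2 * u + /2)).
    { unfold phiA, Rmin; repeat destruct Rle_dec; try lra. }
    unfold concat. cbn [proj1_sig].
    destruct hc as [[h1 h2] | [[h1 h2] | [h1 h2]]]; rewrite h2;
    simp_clamp; kill_dec; fin_eq.
  - intros s. replace ((1 - 1) * phiA (ps s) + 1 * ps s) with (ps s) by ring.
    rewrite clampI_id; auto.
  - intros t ht. unfold phiA.
    replace ((1 - t) * Rmin (2 * 0) (Rmin (0 + / 4) (/ 2 * 0 + / 2)) + t * 0) with 0.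
    2:{ unfold Rmin; repeat destruct Rle_dec; try lra; ring. }
    replace ((1 - t) * Rmin (2 * 1) (Rmin (1 + / 4) (/ 2 * 1 + / 2)) + t * 1) with 1.
    2:{ unfold Rmin; repeat destruct Rle_dec; try lra; ring. }
    split; auto.
Qed.

Lemma hom_lid {X} TX (x0 : X) a : is_loop TX x0 a ->
  homotopic TX x0 (concat (fun _ => x0) a) a.
Proof.
  intros [ca [a0 a1]].
  apply (hom_reparam TX x0 a _ _ (fun s t => (1 - t) * Rmax 0 (2 * s - 1) + t * s)).
  - apply cont1_of; auto.
  - mc2_tac.
  - intros s. destruct s as [u hu]. cbn [proj1_sig].
    unfold concat. cbn [proj1_sig].
    destruct (Rle_dec u (/2)).
    + replace ((1 - 0) * Rmax 0 (2 * u - 1) + 0 * u) with 0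
        by (unfold Rmax; destruct Rle_dec; try lra; ring).
      destruct Rle_dec; [|lra]. rewrite <- a0. f_equal.
    + replace ((1 - 0) * Rmax 0 (2 * u - 1) + 0 * u) with (2 * u - 1)
        by (unfold Rmax; destruct Rle_dec; try lra; ring).
      destruct Rle_dec; [lra|]. auto.
  - intros s. replace ((1 - 1) * Rmax 0 (2 * ps s - 1) + 1 * ps s) with (ps s) by ring.
    rewrite clampI_id; auto.
  - intros t ht.
    replace ((1 - t) * Rmax 0 (2 * 0 - 1) + t * 0) with 0
      by (unfold Rmax; destruct Rle_dec; try lra; ring).
    replace ((1 - t) * Rmax 0 (2 * 1 - 1) + t * 1) with 1
      by (unfold Rmax; destruct Rle_dec; try lra; ring).
    split; auto.
Qed.

Lemma hom_linv {X} TX (x0 : X) a : is_loop TX x0 a ->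
  homotopic TX x0 (concat (reverse a) a) (fun _ => x0).
Proof.
  intros [ca [a0 a1]].
  apply (hom_reparam TX x0 a _ _ (fun s t => t + (1 - t) * Rabs (2 * s - 1))).
  - apply cont1_of; auto.
  - mc2_tac.
  - intros s. destruct s as [u hu]. cbn [proj1_sig].
    unfold concat, reverse. cbn [proj1_sig].
    destruct (Rle_dec u (/2)).
    + replace (0 + (1 - 0) * Rabs (2 * u - 1)) with (1 - 2 * u)
        by (unfold Rabs; destruct Rcase_abs; try lra; ring).
      destruct Rle_dec; [|lra]. simp_clamp. auto.
    + replace (0 + (1 - 0) * Rabs (2 * u - 1)) with (2 * u - 1)
        by (unfold Rabs; destruct Rcase_abs; try lra; ring).
      destruct Rle_dec; [lra|]. auto.
  - intros s. replace (1 + (1 - 1) * Rabs (2 * ps s - 1)) with 1 by ring. auto.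
  - intros t ht.
    replace (t + (1 - t) * Rabs (2 * 0 - 1)) with 1
      by (unfold Rabs; destruct Rcase_abs; try lra; ring).
    replace (t + (1 - t) * Rabs (2 * 1 - 1)) with 1
      by (unfold Rabs; destruct Rcase_abs; try lra; ring).
    split; auto.
Qed.


Lemma cls_rep {A : Type} (Rel : A -> A -> Prop) (c : quot Rel) : cls Rel (rep c) = c.
Proof.
  unfold rep. destruct (constructive_indefinite_description _ (proj2_sig c)) as [a ha].
  simpl. destruct c as [P hP]. simpl in ha. subst P. unfold cls. f_equal. apply proof_irrelevance.
Qed.

Lemma rep_cls {A : Type} (Rel : A -> A -> Prop) (refl : forall x, Rel x x) x :
  Rel x (rep (cls Rel x)).
Proof.
  unfold rep. destruct (constructive_indefinite_description _ (proj2_sig (cls Rel x))) as [a ha].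
  simpl. simpl in ha. rewrite ha. apply refl.
Qed.

Lemma cls_eq {A : Type} (Rel : A -> A -> Prop) (sym : forall x y, Rel x y -> Rel y x)
  (trans : forall x y z, Rel x y -> Rel y z -> Rel x z) a b :
  Rel a b -> cls Rel a = cls Rel b.
Proof.
  intros h. unfold cls.
  assert (E : Rel a = Rel b).
  { apply functional_extensionality; intro x; apply propositional_extensionality; split; eauto. }
  generalize (ex_intro (fun a0 => Rel a = Rel a0) a eq_refl).
  generalize (ex_intro (fun a0 => Rel b = Rel a0) b eq_refl).
  rewrite E. intros; f_equal; apply proof_irrelevance.
Qed.

Lemma htp_refl {X} TX (x0 : X) a : htp TX x0 a a.
Proof. apply hom_refl. apply (proj2_sig a). Qed.
Lemma htp_sym {X} TX (x0 : X) a b : htp TX x0 a b -> htp TX x0 b a.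
Proof. apply hom_sym. Qed.
Lemma htp_trans {X} TX (x0 : X) a b c : htp TX x0 a b -> htp TX x0 b c -> htp TX x0 a c.
Proof. apply hom_trans. Qed.

Definition oconcat {X} TX (x0 : X) (a b : Omega TX x0) : Omega TX x0 :=
  exist _ (concat (proj1_sig a) (proj1_sig b)) (concat_loop TX x0 _ _ (proj2_sig a) (proj2_sig b)).
Definition orev {X} TX (x0 : X) (a : Omega TX x0) : Omega TX x0 :=
  exist _ (reverse (proj1_sig a)) (reverse_loop TX x0 _ (proj2_sig a)).

Lemma pi_eq {X} TX (x0 : X) (c d : pi1 TX x0) : htp TX x0 (rep c) (rep d) -> c = d.
Proof.
  intros h. rewrite <- (cls_rep _ c), <- (cls_rep _ d).
  apply cls_eq; auto. apply htp_sym. apply htp_trans.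
Qed.

Lemma rep_pi {X} TX (x0 : X) a : htp TX x0 (rep (pi_map TX x0 a)) a.
Proof. apply htp_sym. apply (rep_cls (htp TX x0)). apply htp_refl. Qed.

Lemma mul_rep {X} TX (x0 : X) c d :
  htp TX x0 (rep (pi1_mul TX x0 c d)) (oconcat TX x0 (rep c) (rep d)).
Proof.
  apply htp_sym. unfold pi1_mul. apply epsilon_spec.
  exists (pi_map TX x0 (oconcat TX x0 (rep c) (rep d))).
  exact (htp_sym TX x0 _ _ (rep_pi TX x0 (oconcat TX x0 (rep c) (rep d)))).
Qed.

Lemma inv_rep {X} TX (x0 : X) c :
  htp TX x0 (rep (pi1_inv TX x0 c)) (orev TX x0 (rep c)).
Proof.
  apply htp_sym. unfold pi1_inv. apply epsilon_spec.
  exists (pi_map TX x0 (orev TX x0 (rep c))).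
  exact (htp_sym TX x0 _ _ (rep_pi TX x0 (orev TX x0 (rep c)))).
Qed.

Lemma oconcat_cong {X} TX (x0 : X) a a' b b' : htp TX x0 a a' -> htp TX x0 b b' ->
  htp TX x0 (oconcat TX x0 a b) (oconcat TX x0 a' b').
Proof. apply hom_concat. Qed.

Lemma pi1_group {X} TX (HX : is_topology TX) (x0 : X) :
  is_group (pi1_mul TX x0) (pi1_inv TX x0) (pi1_one TX x0 HX).
Proof.
  split; [|split].
  - intros c d e. apply pi_eq.
    eapply htp_trans; [apply mul_rep|].
    eapply htp_trans; [apply oconcat_cong; [apply mul_rep|apply htp_refl]|].
    apply htp_sym.
    eapply htp_trans; [apply mul_rep|].
    eapply htp_trans; [apply oconcat_cong; [apply htp_refl|apply mul_rep]|].
    apply htp_sym. apply hom_assoc; apply (proj2_sig (rep _)).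
  - intros c. apply pi_eq.
    eapply htp_trans; [apply mul_rep|].
    eapply htp_trans; [apply oconcat_cong; [apply rep_pi|apply htp_refl]|].
    apply hom_lid. apply (proj2_sig (rep _)).
  - intros c. apply pi_eq.
    eapply htp_trans; [apply mul_rep|].
    eapply htp_trans; [apply oconcat_cong; [apply inv_rep|apply htp_refl]|].
    apply htp_sym. eapply htp_trans; [apply rep_pi|].
    apply htp_sym. apply hom_linv. apply (proj2_sig (rep _)).
Qed.

From Stdlib Require Import List.


Lemma grp_rinv {G} (mul : G -> G -> G) inv one : is_group mul inv one ->
  forall a, mul a (inv a) = one.
Proof.
  intros [as_ [lid linv]] a.
  rewrite <- (lid (mul a (inv a))). rewrite <- (linv (inv a)) at 1.
  rewrite as_, <- (as_ (inv a) a (inv a)), linv, lid. apply linv.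
Qed.

Lemma grp_rid {G} (mul : G -> G -> G) inv one : is_group mul inv one ->
  forall a, mul a one = a.
Proof.
  intros hg a. destruct hg as [as_ [lid linv]] eqn:E.
  rewrite <- (linv a), <- as_, (grp_rinv mul inv one hg), lid. auto.
Qed.

Lemma grp_c1 {G} (mul : G -> G -> G) inv one : is_group mul inv one ->
  forall a b, mul a (mul (inv a) b) = b.
Proof. intros hg a b. destruct hg as [as_ [lid linv]] eqn:E.
  rewrite <- as_, (grp_rinv mul inv one hg), lid; auto. Qed.

Lemma grp_c2 {G} (mul : G -> G -> G) inv one : is_group mul inv one ->
  forall a b, mul (inv a) (mul a b) = b.
Proof. intros [as_ [lid linv]] a b. rewrite <- as_, linv, lid; auto. Qed.

Lemma grp_inv_uniq {G} (mul : G -> G -> G) inv one : is_group mul inv one ->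
  forall x y, mul x y = one -> x = inv y.
Proof.
  intros hg x y h. destruct hg as [as_ [lid linv]] eqn:E.
  rewrite <- (grp_rid mul inv one hg x), <- (grp_rinv mul inv one hg y), <- as_, h, lid; auto.
Qed.

Lemma grp_inv_mul {G} (mul : G -> G -> G) inv one : is_group mul inv one ->
  forall a b, inv (mul a b) = mul (inv b) (inv a).
Proof.
  intros hg a b. symmetry. apply (grp_inv_uniq mul inv one hg).
  destruct hg as [as_ [lid linv]] eqn:E.
  rewrite as_, <- (as_ (inv a) a b), linv, lid, linv; auto.
Qed.

Lemma grp_inv_inv {G} (mul : G -> G -> G) inv one : is_group mul inv one ->
  forall a, inv (inv a) = a.
Proof.
  intros hg a. symmetry. apply (grp_inv_uniq mul inv one hg). apply (grp_rinv mul inv one hg).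
Qed.

Definition negl {S : Type} (p : bool * S) : bool * S := (negb (fst p), snd p).
Definition winv {S : Type} (w : @word S) : @word S := rev (map negl w).

Lemma eval_app {G} (mul : G -> G -> G) inv one : is_group mul inv one ->
  forall w1 w2, eval_word mul inv one (w1 ++ w2) = mul (eval_word mul inv one w1) (eval_word mul inv one w2).
Proof.
  intros hg w1 w2. destruct hg as [as_ [lid linv]] eqn:E.
  induction w1 as [|p w1 IH]; simpl.
  - rewrite lid; auto.
  - rewrite IH, as_; auto.
Qed.

Lemma eval_red {G} (mul : G -> G -> G) inv one : is_group mul inv one ->
  forall w w', red_step w w' -> eval_word mul inv one w = eval_word mul inv one w'.
Proof.
  intros hg w w' [w1 w2 b x].
  induction w1 as [|p w1 IH]; simpl.
  - destruct b; simpl.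
    + apply (grp_c1 mul inv one hg).
    + rewrite <- (grp_inv_inv mul inv one hg x) at 2. apply (grp_c1 mul inv one hg).
  - simpl in IH. rewrite IH; auto.
Qed.

Lemma eval_eq {G} (mul : G -> G -> G) inv one : is_group mul inv one ->
  forall w w', word_eq w w' -> eval_word mul inv one w = eval_word mul inv one w'.
Proof.
  intros hg w w' h. induction h; auto.
  - apply (eval_red mul inv one hg); auto.
  - congruence.
Qed.

Lemma eval_winv {G} (mul : G -> G -> G) inv one : is_group mul inv one ->
  forall w, eval_word mul inv one (winv w) = inv (eval_word mul inv one w).
Proof.
  intros hg w. unfold winv. induction w as [|[b x] w IH]; simpl.
  - apply (grp_inv_uniq mul inv one hg). apply (grp_rid mul inv one hg).
  - rewrite (eval_app mul inv one hg), IH. simpl.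
    rewrite (grp_rid mul inv one hg), (grp_inv_mul mul inv one hg).
    destruct b; simpl; auto. rewrite (grp_inv_inv mul inv one hg); auto.
Qed.

Lemma weq_refl {S : Type} (w : @word S) : word_eq w w.
Proof. apply rst_refl. Qed.
Lemma weq_sym {S : Type} (w w' : @word S) : word_eq w w' -> word_eq w' w.
Proof. apply rst_sym. Qed.
Lemma weq_trans {S : Type} (w1 w2 w3 : @word S) : word_eq w1 w2 -> word_eq w2 w3 -> word_eq w1 w3.
Proof. apply rst_trans. Qed.

Lemma weq_app_l {S : Type} (u w w' : @word S) : word_eq w w' -> word_eq (u ++ w) (u ++ w').
Proof.
  intros h; induction h.
  - apply rst_step. destruct H. rewrite !app_assoc. constructor.
  - apply rst_refl.
  - apply rst_sym; auto.
  - eapply rst_trans; eauto.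
Qed.

Lemma weq_app_r {S : Type} (v w w' : @word S) : word_eq w w' -> word_eq (w ++ v) (w' ++ v).
Proof.
  intros h; induction h.
  - apply rst_step. destruct H. rewrite <- !app_assoc. simpl. constructor.
  - apply rst_refl.
  - apply rst_sym; auto.
  - eapply rst_trans; eauto.
Qed.

Lemma weq_app {S : Type} (a a' b b' : @word S) : word_eq a a' -> word_eq b b' -> word_eq (a ++ b) (a' ++ b').
Proof. intros; eapply weq_trans; [apply weq_app_r; eauto|apply weq_app_l; auto]. Qed.

Lemma weq_winv {S : Type} (w : @word S) : word_eq (w ++ winv w) nil.
Proof.
  induction w as [|p w IH]; simpl; [apply weq_refl|].
  unfold winv in *; simpl. rewrite app_assoc.
  apply weq_trans with (p :: (nil ++ negl p :: nil)).
  - apply (weq_app_l (p :: nil)). apply (weq_app_r (negl p :: nil) _ nil); auto.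
  - simpl. apply rst_step. destruct p as [b x]. apply (red_cancel nil nil b x).
Qed.

Lemma rep_F {S : Type} (w : @word S) : word_eq w (rep (cls word_eq w)).
Proof. apply rep_cls, weq_refl. Qed.

Lemma cls_F {S : Type} (w w' : @word S) : word_eq w w' -> cls word_eq w = cls word_eq w'.
Proof. apply cls_eq; [apply weq_sym|apply weq_trans]. Qed.

Lemma F_cancel {S : Type} (u a : @FreeGroup S) : F_mul u (F_mul (F_inv u) a) = a.
Proof.
  rewrite <- (cls_rep _ a) at 2. unfold F_mul, F_inv. apply cls_F.
  eapply weq_trans; [apply weq_app_l, weq_sym, rep_F|].
  eapply weq_trans; [apply weq_app_l, weq_app_r, weq_sym, rep_F|].
  rewrite app_assoc. change (rev (map (fun p => (negb (fst p), snd p)) (rep u))) with (winv (rep u)).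
  apply (weq_app_r (rep a) _ nil). apply weq_winv.
Qed.

Lemma mG_mul {G} (mul : G -> G -> G) inv one : is_group mul inv one ->
  forall u v, m_G mul inv one (F_mul u v) = mul (m_G mul inv one u) (m_G mul inv one v).
Proof.
  intros hg u v. unfold m_G, F_mul. rewrite <- (eval_app mul inv one hg).
  symmetry; apply (eval_eq mul inv one hg), rep_F.
Qed.

Lemma mG_inv {G} (mul : G -> G -> G) inv one : is_group mul inv one ->
  forall u, m_G mul inv one (F_inv u) = inv (m_G mul inv one u).
Proof.
  intros hg u. unfold m_G, F_inv. rewrite <- (eval_winv mul inv one hg).
  symmetry; apply (eval_eq mul inv one hg), rep_F.
Qed.

Lemma mG_eta {G} (mul : G -> G -> G) inv one : is_group mul inv one ->
  forall x, m_G mul inv one (F_eta x) = x.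
Proof.
  intros hg x. unfold m_G, F_eta.
  rewrite <- (eval_eq mul inv one hg _ _ (rep_F _)). simpl. apply (grp_rid mul inv one hg).
Qed.


Lemma FM_top_top {S : Type} (TS : (S -> Prop) -> Prop) : is_topology (FM_top TS).
Proof. apply gen_top. Qed.

Lemma FM_group {S : Type} (TS : (S -> Prop) -> Prop) :
  is_group_topology F_mul F_inv (FM_top TS).
Proof.
  split; [apply FM_top_top|split].
  - apply cont_gen; [apply prodtop_top|].
    intros V [T [[hT [hm hi]] [he hV]]].
    apply (prodtop_mono T _ T _); try (intros; apply gen_sub; exists T; split; [exact (conj hT (conj hm hi))|split; auto]).
    apply hm; auto.
  - apply cont_gen; [apply FM_top_top|].
    intros V [T [[hT [hm hi]] [he hV]]].
    apply gen_sub. exists T; split; [exact (conj hT (conj hm hi))|split; [auto|apply hi; auto]].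
Qed.

Lemma eta_cont {S : Type} (TS : (S -> Prop) -> Prop) :
  is_topology TS -> continuous TS (FM_top TS) F_eta.
Proof.
  intros hS. apply cont_gen; auto. intros V [T [[hT _] [he hV]]]. apply he; auto.
Qed.

Definition pull {A B : Type} (TB : (B -> Prop) -> Prop) (h : A -> B) : (A -> Prop) -> Prop :=
  fun W => exists V, TB V /\ forall x, W x <-> V (h x).

Lemma pull_top {A B : Type} (TB : (B -> Prop) -> Prop) (h : A -> B) :
  is_topology TB -> is_topology (pull TB h).
Proof.
  intros [h1 [h2 h3]]. split; [|split].
  - exists (fun _ => True); split; auto; tauto.
  - intros U V [U' [hU eU]] [V' [hV eV]]. exists (fun b => U' b /\ V' b); split; auto.
    intro x; rewrite eU, eV; tauto.
  - intros F hF.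
    exists (fun b => exists V, (exists W, F W /\ TB V /\ forall x, W x <-> V (h x)) /\ V b).
    split.
    + apply h3. intros V [W [_ [hV _]]]; auto.
    + intros x; split.
      * intros [W [hW hx]]. destruct (hF W hW) as [V [hV eV]]. exists V; split; [exists W|apply eV]; auto.
      * intros [V [[W [hW [hV eV]]] hx]]. exists W; split; auto. apply eV; auto.
Qed.

Lemma pull_cont {A B : Type} (TB : (B -> Prop) -> Prop) (h : A -> B) : continuous (pull TB h) TB h.
Proof. intros V hV. exists V; split; auto; tauto. Qed.

Lemma pull_group {A B : Type} (amul : A -> A -> A) ainv (bmul : B -> B -> B) binv TB (h : A -> B) :
  is_group_topology bmul binv TB ->
  (forall u v, h (amul u v) = bmul (h u) (h v)) -> (forall u, h (ainv u) = binv (h u)) ->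
  is_group_topology amul ainv (pull TB h).
Proof.
  intros [hB [hm hi]] em ei. assert (hP := pull_top TB h hB).
  split; [auto|split].
  - intros W [V [hV eV]].
    assert (C : continuous (prodtop (pull TB h) (pull TB h)) (prodtop TB TB) (fun p => (h (fst p), h (snd p)))).
    { apply cont_pair; [apply prodtop_top| |];
      (eapply cont_comp; [|apply pull_cont]); [apply cont_fst|apply cont_snd]; auto. }
    eapply open_ext; [apply (C _ (hm V hV))|].
    intros p; simpl. rewrite eV, em; tauto.
  - intros W [V [hV eV]].
    eapply open_ext; [apply (pull_cont TB h _ (hi V hV))|].
    intros p; simpl. rewrite eV, ei; tauto.
Qed.

Lemma quot_group {F G : Type} (fmul : F -> F -> F) finv FT (gmul : G -> G -> G) ginv gone
  (m : F -> G) (sec : G -> F) :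
  is_group gmul ginv gone -> is_group_topology fmul finv FT ->
  (forall u v, m (fmul u v) = gmul (m u) (m v)) -> (forall u, m (finv u) = ginv (m u)) ->
  (forall x, m (sec x) = x) -> (forall u a, fmul u (fmul (finv u) a) = a) ->
  is_group_topology gmul ginv (pre_top FT m).
Proof.
  intros hg [hF [hm hi]] em ei es ec.
  assert (hT := pre_top_top FT m hF).
  assert (rmul : forall j, continuous FT FT (fun z => fmul z j)).
  { intros j. apply (cont_comp FT (prodtop FT FT) FT (fun z => (z, j)) (fun p => fmul (fst p) (snd p))); auto.
    apply cont_pair; auto; [apply cont_id|apply cont_const; auto]. }
  assert (img : forall A, FT A -> pre_top FT m (fun g => exists y, A y /\ m y = g)).
  { intros A hA. unfold pre_top. apply open_local; auto.
    intros z [y [hy ey]].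
    exists (fun z' => A (fmul z' (fmul (finv z) y))). split; [|split].
    - apply (rmul _ A hA).
    - rewrite ec; auto.
    - intros z' hz'. exists (fmul z' (fmul (finv z) y)); split; auto.
      rewrite em, em, ei, ey. rewrite (proj2 (proj2 hg)). apply (grp_rid gmul ginv gone hg). }
  split; [auto|split].
  - intros U hU. apply open_local; [apply prodtop_top|].
    intros [c d] hcd. simpl in hcd.
    assert (hW : prodtop FT FT (fun q => U (m (fmul (fst q) (snd q))))) by (apply (hm (fun u => U (m u))); auto).
    destruct (prod_rect FT FT _ hF hF hW (sec c) (sec d)) as [A [B [hA [hB [ha [hb H]]]]]].
    { simpl. rewrite em, !es; auto. }
    exists (fun q => (fun g => exists y, A y /\ m y = g) (fst q) /\ (fun g => exists y, B y /\ m y = g) (snd q)).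
    split; [|split].
    + exact (rect_open _ _ _ _ (img A hA) (img B hB)).
    + simpl; split; [exists (sec c)|exists (sec d)]; auto.
    + intros [c' d'] [[y1 [h1 e1]] [y2 [h2 e2]]]. simpl. subst.
      specialize (H _ _ h1 h2). simpl in H. rewrite em in H. simpl in e1, e2. subst. exact H.
  - intros U hU. unfold pre_top.
    eapply open_ext; [apply (hi _ hU)|]. intros x; simpl. rewrite ei; tauto.
Qed.


Theorem theorem3p12 (X : Type) (TX : (X -> Prop) -> Prop) (HX : is_topology TX)
  (x0 : X) :
  is_group_topology (pi1_mul TX x0) (pi1_inv TX x0) (pi1_tau_top TX HX x0) /\
  continuous (CO TX x0) (pi1_tau_top TX HX x0) (pi_map TX x0) /\
  (forall T : (pi1 TX x0 -> Prop) -> Prop,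
     is_group_topology (pi1_mul TX x0) (pi1_inv TX x0) T ->
     continuous (CO TX x0) T (pi_map TX x0) ->
     forall U, T U -> pi1_tau_top TX HX x0 U) /\
  (forall (G : Type) (gmul : G -> G -> G) (ginv : G -> G) (gone : G)
          (TG : (G -> Prop) -> Prop),
     is_group gmul ginv gone -> is_group_topology gmul ginv TG ->
     forall Phi : pi1 TX x0 -> G,
       (forall a b, Phi (pi1_mul TX x0 a b) = gmul (Phi a) (Phi b)) ->
       continuous (CO TX x0) TG (fun a => Phi (pi_map TX x0 a)) ->
       continuous (pi1_tau_top TX HX x0) TG Phi).
Proof.
  pose proof (pi1_group TX HX x0) as hg.
  set (PM := pi1_mul TX x0) in *. set (PI := pi1_inv TX x0) in *. set (P1 := pi1_one TX x0 HX) in *.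
  set (m := m_G PM PI P1).
  assert (hQ : is_topology (qtop TX x0)) by (apply (pre_top_top (CO TX x0) (pi_map TX x0)), gen_top).
  set (FT := FM_top (qtop TX x0)).
  assert (tauE : pi1_tau_top TX HX x0 = pre_top FT m) by reflexivity.
  rewrite tauE.
  pose proof (mG_mul PM PI P1 hg) as em. pose proof (mG_inv PM PI P1 hg) as ei.
  pose proof (mG_eta PM PI P1 hg) as es. fold m in em, ei, es.
  split; [|split; [|split]].
  - apply (quot_group F_mul F_inv FT PM PI P1 m F_eta); auto.
    + apply FM_group.
    + apply F_cancel.
  - intros U hU. unfold pre_top in hU.
    pose proof (eta_cont (qtop TX x0) hQ _ hU) as h. unfold qtop in h.
    eapply open_ext; [apply h|]. intros a; simpl. rewrite es; tauto.
  - intros T hT hpi U hU. unfold pre_top. apply gen_sub.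
    exists (pull T m). split; [|split].
    + apply pull_group with PM PI; auto.
    + intros W [V [hV eV]]. unfold qtop.
      eapply open_ext; [apply (hpi V hV)|]. intros a; simpl. rewrite eV, es; tauto.
    + exists U; split; auto; tauto.
  - intros G gmul ginv gone TG hG hTG Phi hPhi hc V hV.
    assert (Pone : Phi P1 = gone).
    { assert (E : gmul (Phi P1) (Phi P1) = Phi P1).
      { rewrite <- hPhi. f_equal. apply (proj1 (proj2 hg)). }
      rewrite <- (grp_c2 gmul ginv gone hG (Phi P1) (Phi P1)), E. apply (proj2 (proj2 hG)). }
    assert (Pinv : forall c, Phi (PI c) = ginv (Phi c)).
    { intros c. apply (grp_inv_uniq gmul ginv gone hG). rewrite <- hPhi.
      rewrite (proj2 (proj2 hg)). auto. }
    unfold pre_top. apply gen_sub.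
    exists (pull TG (fun u => Phi (m u))). split; [|split].
    + apply pull_group with gmul ginv; auto.
      * intros u v; rewrite em; auto.
      * intros u; rewrite ei; auto.
    + intros W [V' [hV' eV]]. unfold qtop.
      eapply open_ext; [apply (hc V' hV')|]. intros a; simpl. rewrite eV, es; tauto.
    + exists V; split; auto; tauto.
Qed.
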